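(* Let $m(x,\xi)$ be a complex linear form on $\mathbf{C}^{2n}$ and consider the complex phase space translation $\exp(H_m)(\rho) = \rho + H_m$, $\rho \in \mathbf{C}^{2n}$. Let $\Phi$ be a strictly plurisubharmonic quadratic form on $\mathbf{C}^n$. Then $\exp(H_m)(\Lambda_{\Phi}) = \Lambda_{\Psi}$, where $\Psi$ is the strictly plurisubharmonic quadratic polynomial on $\mathbf{C}^n$ given by $$\Psi(x) = \Phi(x) + \mathrm{Im}\, \left(m\left(x,\frac{2}{i}\frac{\partial \Phi}{\partial x}(x)\right)\right),\quad x \in \mathbf{C}^n.$$
   Context: For a complex linear form $m(x,\xi)=m'_x\cdot x+m'_\xi\cdot\xi$ on $\mathbf{C}^{2n}$, its Hamilton vector field is the constant vector $H_m=(m'_\xi,-m'_x)\in\mathbf{C}^{2n}$. For a real-valued polynomial $\Phi$ on $\mathbf{C}^n$, $\Lambda_{\Phi} = \{(x,\frac{2}{i}\frac{\partial \Phi}{\partial x}(x)) : x\in \mathbf{C}^n\}\subset\mathbf{C}^{2n}$, with $\partial/\partial x$ the holomorphic derivative. *)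

(* Defs.v *)
From HB Require Import structures.
From mathcomp Require Import all_boot all_order all_algebra.
From mathcomp Require Import all_classical all_reals all_analysis.
From mathcomp Require Import complex.
Set Implicit Arguments. Unset Strict Implicit. Unset Printing Implicit Defensive.
Import Order.TTheory GRing.Theory Num.Theory.
Local Open Scope ring_scope.

Section Defs.
Variables (R : realType) (n : nat).
Local Notation C := (R[i]).
Local Notation Cn := 'rV[C]_n.

Definition evec (j : 'I_n) : Cn := \row_k (if k == j then 1 else 0).

Definition rdir (f : Cn -> C) (x v : Cn) : C :=
  (derive1 (fun t : R => complex.Re (f (x + (t%:C)%C *: v))) 0)%:C%C
  + 'i%C * (derive1 (fun t : R => complex.Im (f (x + (t%:C)%C *: v))) 0)%:C%C.

(* Wirtinger derivatives d/dx_j = (d/dRe x_j - i d/dIm x_j)/2,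
   d/dxbar_j = (d/dRe x_j + i d/dIm x_j)/2 *)
Definition dx (j : 'I_n) (f : Cn -> C) : Cn -> C := fun x =>
  (rdir f x (evec j) - 'i%C * rdir f x ('i%C *: evec j)) / 2%:R.
Definition dxbar (j : 'I_n) (f : Cn -> C) : Cn -> C := fun x =>
  (rdir f x (evec j) + 'i%C * rdir f x ('i%C *: evec j)) / 2%:R.

Definition hgrad (Phi : Cn -> R) (x : Cn) : Cn :=
  \row_j dx j (fun y => (Phi y)%:C%C) x.

Definition Lambda (Phi : Cn -> R) : set (Cn * Cn) :=
  [set p | exists x : Cn, p = (x, (2%:R / 'i%C) *: hgrad Phi x)].

Definition realify (x : Cn) : 'rV[R]_(n + n) :=
  row_mx (map_mx (@complex.Re R) x) (map_mx (@complex.Im R) x).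

Definition is_real_quad_form (Phi : Cn -> R) : Prop :=
  exists Q : 'M[R]_(n + n),
    forall x, Phi x = (realify x *m Q *m (realify x)^T) 0 0.

Definition is_real_quad_poly (Phi : Cn -> R) : Prop :=
  exists (Q : 'M[R]_(n + n)) (l : 'rV[R]_(n + n)) (c : R),
    forall x, Phi x = (realify x *m Q *m (realify x)^T) 0 0
                      + (l *m (realify x)^T) 0 0 + c.

Definition strictly_psh (Phi : Cn -> R) : Prop :=
  forall (x v : Cn), v != 0 ->
    0 < \sum_(j < n) \sum_(k < n)
          dx j (dxbar k (fun y => (Phi y)%:C%C)) x * v 0 j * (v 0 k)^*%C.

Definition linform (a b : Cn) (x xi : Cn) : C :=
  \sum_(j < n) a 0 j * x 0 j + \sum_(j < n) b 0 j * xi 0 j.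

(* its Hamilton vector field H_m = (m'_xi, - m'_x) = (b, -a) *)
Definition Ham (a b : Cn) : Cn * Cn := (b, - a).

Definition expH (a b : Cn) (rho : Cn * Cn) : Cn * Cn :=
  (rho.1 + (Ham a b).1, rho.2 + (Ham a b).2).

End Defs.

(* Main.v *)
Require Import Defs.
From HB Require Import structures.
From mathcomp Require Import all_boot all_order all_algebra.
From mathcomp Require Import all_classical all_reals all_analysis.
From mathcomp Require Import complex.
From mathcomp Require Import ring lra.
Import Order.TTheory GRing.Theory Num.Theory.
Local Open Scope ring_scope.
Local Open Scope classical_set_scope.
Set Implicit Arguments. Unset Strict Implicit. Unset Printing Implicit Defensive.
Ltac fix0 := repeat match goal with
  | |- context [@Algebra.hasZero.zero ?T ?m] =>
      match goal with |- @eq ?U _ _ => change (@Algebra.hasZero.zero T m) with (0 : U) end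
  end.
Ltac cring := fix0; rewrite ?(mul0r, mulr0, add0r, addr0, subr0, sub0r, mul1r, mulr1); first [ring | field].
Section CX.
Variable R : realType.
Local Notation C := (R[i]).
Implicit Types (x y z : C) (k : R).

Lemma cext x y : complex.Re x = complex.Re y -> complex.Im x = complex.Im y -> x = y.
Proof. by case: x => ? ?; case: y => ? ? /= H1 H2; rewrite H1 H2. Qed.
Lemma ReD x y : complex.Re (x + y) = complex.Re x + complex.Re y. Proof. by case: x; case: y. Qed.
Lemma ImD x y : complex.Im (x + y) = complex.Im x + complex.Im y. Proof. by case: x; case: y. Qed.
Lemma ReN x : complex.Re (- x) = - complex.Re x. Proof. by case: x. Qed.
Lemma ImN x : complex.Im (- x) = - complex.Im x. Proof. by case: x. Qed.
Lemma ReM x y : complex.Re (x * y) = complex.Re x * complex.Re y - complex.Im x * complex.Im y. Proof. by case: x; case: y. Qed.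
Lemma ImM x y : complex.Im (x * y) = complex.Re x * complex.Im y + complex.Im x * complex.Re y. Proof. by case: x => ? ?; case: y => ? ? /=; rewrite addrC. Qed.
Lemma ReR k : complex.Re (k%:C)%C = k. Proof. by []. Qed.
Lemma ImR k : complex.Im (k%:C)%C = 0. Proof. by []. Qed.
Lemma Rei : complex.Re 'i%C = 0 :> R. Proof. by []. Qed.
Lemma Imi : complex.Im 'i%C = 1 :> R. Proof. by []. Qed.
Lemma Re0 : complex.Re (0 : C) = 0. Proof. by []. Qed.
Lemma Im0 : complex.Im (0 : C) = 0. Proof. by []. Qed.
Lemma Re1 : complex.Re (1 : C) = 1. Proof. by []. Qed.
Lemma Im1 : complex.Im (1 : C) = 0. Proof. by []. Qed.
Lemma cnat (m : nat) : (m%:R : C) = (m%:R : R)%:C%C.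
Proof. by rewrite rmorph_nat. Qed.
Lemma ReV2 x : complex.Re (x / 2%:R) = complex.Re x / 2.
Proof. by rewrite cnat -fmorphV ReM ReR ImR mulr0 subr0. Qed.
Lemma ImV2 x : complex.Im (x / 2%:R) = complex.Im x / 2.
Proof. by rewrite cnat -fmorphV ImM ReR ImR mulr0 add0r. Qed.
Lemma c2i : (2%:R / 'i%C : C) = (0 +i* (-2))%C.
Proof.
apply: (mulIf (x := 'i%C)); first by apply/eqP => -[] /eqP; rewrite oner_eq0.
rewrite divfK; last by apply/eqP => -[] /eqP; rewrite oner_eq0.
by apply: cext; rewrite ?ReM ?ImM cnat /=; ring.
Qed.
Lemma Re2i : complex.Re (2%:R / 'i%C : C) = 0. Proof. by rewrite c2i. Qed.
Lemma Im2i : complex.Im (2%:R / 'i%C : C) = -2. Proof. by rewrite c2i. Qed.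
End CX.

Definition cE := (ReV2, ImV2, Re2i, Im2i, ReD, ImD, ReN, ImN, ReM, ImM, ReR, ImR, Rei, Imi, Re0, Im0, Re1, Im1).

Lemma derive1_quad (R : realType) (A B C : R) :
  derive1 (fun t : R => A + t * B + t ^+ 2 * C) 0 = B.
Proof.
rewrite derive1E.
have H : is_derive (0:R) 1 (fun t : R => A + t * B + t ^+ 2 * C) B.
  apply: is_derive_eq.
  by rewrite /= expr0n /= !(scaler0, scale0r, add0r, addr0, mul1r) -[RHS]mulr1.
by rewrite derive_val.
Qed.
Section Main.
Variables (R : realType) (n : nat).
Local Notation C := (R[i]).
Local Notation Cn := 'rV[C]_n.
Local Notation r := (@realify R n).
Local Notation e := (@evec R n).

Lemma realify_l (x : Cn) j : r x 0 (lshift n j) = complex.Re (x 0 j).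
Proof. by rewrite /realify row_mxEl mxE. Qed.
Lemma realify_r (x : Cn) j : r x 0 (rshift n j) = complex.Im (x 0 j).
Proof. by rewrite /realify row_mxEr mxE. Qed.

Lemma realifyD (u w : Cn) : r (u + w) = r u + r w.
Proof.
rewrite /realify add_row_mx; congr row_mx; apply/matrixP => i j; rewrite !mxE cE //.
Qed.
Lemma realifyZ (t : R) (w : Cn) : r ((t%:C)%C *: w) = t *: r w.
Proof.
rewrite /realify scale_row_mx; congr row_mx; apply/matrixP => i j; rewrite !mxE !cE;
  rewrite mul0r ?subr0 ?addr0 //.
Qed.

Definition bil (Q : 'M[R]_(n + n)) (p q : 'rV[R]_(n + n)) := (p *m Q *m q^T) 0 0.

Lemma bilDl Q p p' q : bil Q (p + p') q = bil Q p q + bil Q p' q.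
Proof. by rewrite /bil !mulmxDl mxE. Qed.
Lemma bilDr Q p q q' : bil Q p (q + q') = bil Q p q + bil Q p q'.
Proof. by rewrite /bil linearD /= mulmxDr mxE. Qed.
Lemma bilZl Q t p q : bil Q (t *: p) q = t * bil Q p q.
Proof. by rewrite /bil -!scalemxAl mxE. Qed.
Lemma bilZr Q t p q : bil Q p (t *: q) = t * bil Q p q.
Proof. by rewrite /bil linearZ /= -scalemxAr mxE. Qed.

Definition Df Q (x w : Cn) := bil Q (r x) (r w) + bil Q (r w) (r x).

Lemma DfC Q x w : Df Q x w = Df Q w x.
Proof. by rewrite /Df addrC. Qed.
Lemma DfDl Q x v w (t : R) : Df Q (x + (t%:C)%C *: v) w = Df Q x w + t * Df Q v w.
Proof. rewrite /Df realifyD realifyZ bilDl bilDr bilZl bilZr; ring. Qed.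
Lemma DfDr Q x v w (t : R) : Df Q w (x + (t%:C)%C *: v) = Df Q w x + t * Df Q w v.
Proof. by rewrite DfC DfDl !(DfC Q w). Qed.
Lemma quad_exp Q x v (t : R) : bil Q (r (x + (t%:C)%C *: v)) (r (x + (t%:C)%C *: v)) =
  bil Q (r x) (r x) + t * Df Q x v + t ^+ 2 * bil Q (r v) (r v).
Proof. rewrite /Df realifyD realifyZ !(bilDl, bilDr, bilZl, bilZr); ring. Qed.

End Main.
Section Rdir.
Variables (R : realType) (n : nat).
Local Notation C := (R[i]).
Local Notation Cn := 'rV[C]_n.
Local Notation r := (@realify R n).
Local Notation e := (@evec R n).

Lemma rdir_genR (F : Cn -> R) x v A B Cc :
  (forall t : R, F (x + (t%:C)%C *: v) = A + t * B + t ^+ 2 * Cc) ->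
  rdir (fun y => (F y)%:C%C) x v = (B%:C)%C.
Proof.
move=> H; rewrite /rdir.
have -> : (fun t : R => complex.Re ((F (x + (t%:C)%C *: v))%:C)%C) =
  (fun t => A + t * B + t ^+ 2 * Cc) by apply: funext => t; rewrite ReR H.
have -> : (fun t : R => complex.Im ((F (x + (t%:C)%C *: v))%:C)%C) =
  (fun t => 0 + t * 0 + t ^+ 2 * 0) by apply: funext => t; rewrite ImR; ring.
rewrite !derive1_quad; apply: cext; rewrite !cE ?mul0r ?mulr0 ?subrr ?addr0 ?add0r //.
Qed.

Lemma rdir_genC (G : Cn -> C) x v G1 :
  (forall t : R, G (x + (t%:C)%C *: v) = G x + (t%:C)%C * G1) ->
  rdir G x v = G1.
Proof.
move=> H; rewrite /rdir.
have -> : (fun t : R => complex.Re (G (x + (t%:C)%C *: v))) =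
  (fun t => complex.Re (G x) + t * complex.Re G1 + t ^+ 2 * 0).
  by apply: funext => t; rewrite H !cE; cring.
have -> : (fun t : R => complex.Im (G (x + (t%:C)%C *: v))) =
  (fun t => complex.Im (G x) + t * complex.Im G1 + t ^+ 2 * 0).
  by apply: funext => t; rewrite H !cE; cring.
by rewrite !derive1_quad [RHS]complexE.
Qed.

Definition linR (l : Cn -> R) := forall x v (t : R), l (x + (t%:C)%C *: v) = l x + t * l v.

Lemma rdir_qp Q (l : Cn -> R) (F : Cn -> R) x v :
  (forall y, F y = bil Q (r y) (r y) + l y) -> linR l ->
  rdir (fun y => (F y)%:C%C) x v = ((Df Q x v + l v)%:C)%C.
Proof.
move=> HF Hl; apply: (rdir_genR (A := F x) (Cc := bil Q (r v) (r v))) => t.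
rewrite !HF quad_exp Hl; ring.
Qed.

Lemma dxbar_qp Q l F k x :
  (forall y, F y = bil Q (r y) (r y) + l y) -> linR l ->
  dxbar k (fun y => (F y)%:C%C) x =
  (((Df Q x (e k) + l (e k))%:C)%C + 'i%C * ((Df Q x ('i%C *: e k) + l ('i%C *: e k))%:C)%C) / 2%:R.
Proof. by move=> HF Hl; rewrite /dxbar !(rdir_qp _ _ HF Hl). Qed.

Lemma dx_qp Q l F k x :
  (forall y, F y = bil Q (r y) (r y) + l y) -> linR l ->
  dx k (fun y => (F y)%:C%C) x =
  (((Df Q x (e k) + l (e k))%:C)%C - 'i%C * ((Df Q x ('i%C *: e k) + l ('i%C *: e k))%:C)%C) / 2%:R.
Proof. by move=> HF Hl; rewrite /dx !(rdir_qp _ _ HF Hl). Qed.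

Definition G1 Q k (v : Cn) : C :=
  (((Df Q v (e k))%:C)%C + 'i%C * ((Df Q v ('i%C *: e k))%:C)%C) / 2%:R.

Definition levi Q j k : C := (G1 Q k (e j) - 'i%C * G1 Q k ('i%C *: e j)) / 2%:R.

Lemma levi_qp Q l F j k x :
  (forall y, F y = bil Q (r y) (r y) + l y) -> linR l ->
  dx j (dxbar k (fun y => (F y)%:C%C)) x = levi Q j k.
Proof.
move=> HF Hl; rewrite /dx /levi.
have H v : rdir (dxbar k (fun y => (F y)%:C%C)) x v = G1 Q k v.
  apply: rdir_genC => t; rewrite !(dxbar_qp k _ HF Hl) /G1 !DfDl.
  apply: cext; rewrite !cE; cring.
by rewrite !H.
Qed.

End Rdir.
Section Lin.
Variables (R : realType) (n : nat).
Local Notation C := (R[i]).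
Local Notation Cn := 'rV[C]_n.
Local Notation r := (@realify R n).
Local Notation e := (@evec R n).

Lemma one_C : ((1 : R)%:C)%C = 1 :> C. Proof. by []. Qed.

Lemma linR0 (phi : Cn -> R) : linR phi -> phi 0 = 0.
Proof.
by move=> H; have := H 0 0 1; rewrite scaler0 addr0 mul1r => h; lra.
Qed.
Lemma linRD (phi : Cn -> R) : linR phi -> forall u w, phi (u + w) = phi u + phi w.
Proof. by move=> H u w; have := H u w 1; rewrite one_C scale1r mul1r. Qed.
Lemma linRZ (phi : Cn -> R) : linR phi -> forall t w, phi ((t%:C)%C *: w) = t * phi w.
Proof. by move=> H t w; have := H 0 w t; rewrite add0r linR0 // add0r. Qed.

Lemma decomp (x : Cn) : x = \sum_(j < n)
  (((complex.Re (x 0 j))%:C)%C *: e j + ((complex.Im (x 0 j))%:C)%C *: ('i%C *: e j)).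
Proof.
apply/rowP => k; rewrite summxE (bigD1 k) //= big1 => [|j /negbTE jk].
  by rewrite !mxE eqxx addr0 [LHS]complexE; apply: cext; rewrite !cE; cring.
by rewrite !mxE eq_sym jk; apply: cext; rewrite !cE; cring.
Qed.

Lemma expand (phi : Cn -> R) : linR phi -> forall x,
  phi x = \sum_(j < n) (complex.Re (x 0 j) * phi (e j) + complex.Im (x 0 j) * phi ('i%C *: e j)).
Proof.
move=> H x; rewrite {1}(decomp x).
rewrite (big_morph phi (linRD H) (linR0 H)); apply: eq_bigr => j _.
by rewrite linRD // !linRZ.
Qed.

Definition aIm (a : Cn) (x : Cn) : R :=
  \sum_(j < n) (complex.Im (a 0 j) * complex.Re (x 0 j) + complex.Re (a 0 j) * complex.Im (x 0 j)).

Lemma aIm_lin a : linR (aIm a).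
Proof.
move=> x v t; rewrite /aIm mulr_sumr -big_split; apply: eq_bigr => j _.
rewrite /= !mxE !cE; cring.
Qed.

Lemma aIm_e a j : aIm a (e j) = complex.Im (a 0 j).
Proof.
rewrite /aIm (bigD1 j) //= big1 => [|k /negbTE kj].
  by rewrite !mxE eqxx !cE; cring.
by rewrite !mxE kj !cE; cring.
Qed.
Lemma aIm_ie a j : aIm a ('i%C *: e j) = complex.Re (a 0 j).
Proof.
rewrite /aIm (bigD1 j) //= big1 => [|k /negbTE kj].
  by rewrite !mxE eqxx !cE; cring.
by rewrite !mxE kj !cE; cring.
Qed.

Lemma Df_lin (Q : 'M[R]_(n + n)) (x : Cn) : linR (Df Q x).
Proof. by move=> y v t; rewrite DfDr. Qed.
Lemma Df_linl (Q : 'M[R]_(n + n)) (w : Cn) : linR (fun x => Df Q x w).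
Proof. by move=> y v t; rewrite DfDl. Qed.

End Lin.
Section Psi.
Variables (R : realType) (n : nat).
Local Notation C := (R[i]).
Local Notation Cn := 'rV[C]_n.
Local Notation r := (@realify R n).
Local Notation e := (@evec R n).

Definition lPsi (a b : Cn) (Phi : Cn -> R) (x : Cn) : R :=
  complex.Im (linform a b x ((2%:R / 'i%C) *: hgrad Phi x)).

Lemma lPsiE (Q : 'M[R]_(n + n)) a b (Phi : Cn -> R) :
  (forall y, Phi y = bil Q (r y) (r y)) ->
  forall x, lPsi a b Phi x = aIm a x - Df Q x b.
Proof.
move=> HQ x.
have HF : forall y, Phi y = bil Q (r y) (r y) + (fun _ : Cn => 0 : R) y.
  by move=> y; rewrite HQ addr0.
have l0 : linR (fun _ : Cn => 0 : R) by move=> *; rewrite mulr0 addr0.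
rewrite (expand (Df_lin Q x) b) /lPsi /linform ImD.
rewrite !(big_morph (@complex.Im R) (@ImD R) (@Im0 R)) /aIm -sumrN.
congr (_ + _); apply: eq_bigr => j _.
  by rewrite !cE; cring.
by rewrite !mxE (dx_qp j _ HF l0) !cE; cring.
Qed.

End Psi.

Theorem lemma2p2 (R : realType) (n : nat) (a b : 'rV[R[i]]_n)
    (Phi : 'rV[R[i]]_n -> R) :
  is_real_quad_form Phi -> strictly_psh Phi ->
  let Psi := fun x : 'rV[R[i]]_n =>
    Phi x + complex.Im (linform a b x ((2%:R / 'i%C) *: hgrad Phi x)) in
  [/\ is_real_quad_poly Psi, strictly_psh Psi
    & expH a b @` Lambda Phi = Lambda Psi].
Proof.
move=> [Q HQ] Hpsh Psi.
have HQ' : forall y, Phi y = bil Q (realify y) (realify y) by [].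
have HF : forall y, Phi y = bil Q (realify y) (realify y) + (fun _ : 'rV[R[i]]_n => 0 : R) y.
  by move=> y; rewrite HQ addr0.
have l0 : linR (fun _ : 'rV[R[i]]_n => 0 : R) by move=> *; rewrite mulr0 addr0.
have Hl : linR (lPsi a b Phi).
  by move=> x v t; rewrite !(lPsiE a b HQ') aIm_lin DfDl; ring.
have HPsi : forall y, Psi y = bil Q (realify y) (realify y) + lPsi a b Phi y.
  by move=> y; rewrite /Psi HQ.
have core : forall x, (2%:R / 'i%C) *: hgrad Psi (x + b) = (2%:R / 'i%C) *: hgrad Phi x - a.
  move=> x; apply/rowP => j; rewrite !mxE (dx_qp j _ HPsi Hl) (dx_qp j _ HF l0).
  rewrite !(lPsiE a b HQ') aIm_e aIm_ie.
  have DfD : forall w, Df Q (x + b) w = Df Q x w + Df Q b w.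
    by move=> w; have := DfDl Q x b w 1; rewrite one_C scale1r mul1r.
  rewrite !DfD (DfC Q (evec R j) b) (DfC Q ('i%C *: evec R j) b).
  by apply: cext; rewrite !cE; cring.
split.
- exists Q, (row_mx (\row_j lPsi a b Phi (evec R j)) (\row_j lPsi a b Phi ('i%C *: evec R j))), 0.
  move=> x; rewrite addr0 HPsi; congr (_ + _).
  rewrite (expand Hl x) /realify tr_row_mx mul_row_col !mxE [LHS]big_split.
  by congr (_ + _); apply: eq_bigr => j _; rewrite !mxE mulrC.
- have E : forall x j k, dx j (dxbar k (fun y => (Psi y)%:C%C)) x =
                       dx j (dxbar k (fun y => (Phi y)%:C%C)) x.
    by move=> x j k; rewrite (levi_qp j k x HPsi Hl) (levi_qp j k x HF l0).
  move=> x v hv.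
  rewrite (eq_bigr (fun j => \sum_(k < n)
      dx j (dxbar k (fun y => (Phi y)%:C%C)) x * v 0 j * (v 0 k)^*%C)).
    exact: Hpsh.
  by move=> j _; apply: eq_bigr => k _; rewrite E.
- rewrite eqEsubset; split.
  + move=> _ [p [x ->] <-]; exists (x + b).
    rewrite core /expH /Ham [in LHS]/fst [in LHS]/snd; reflexivity.
  + move=> _ [y ->]; exists (y - b, (2%:R / 'i%C) *: hgrad Phi (y - b)).
      by exists (y - b).
    rewrite /expH /Ham [in LHS]/fst [in LHS]/snd -core subrK; reflexivity.
Qed.
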